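(* Let $n$ be an odd positive integer and let $p^a$ be a prime power dividing $n$ ($p$ prime, $a\ge1$). Suppose there is a prime $q$ with $n/3<q<n/2$ and $n-2q<p^a$. Then for every integer $k$ with $1\le k\le n-1$, $\binom{n}{k}$ is divisible by $p$ or by $q$. *)

(* Defs.v *)
From mathcomp Require Import all_boot.

(* Main.v *)
Require Import Defs.
From mathcomp Require Import all_boot.
From mathcomp Require Import zify.

Lemma coprime_fact q m : prime q -> m < q -> coprime q m`!.
Proof.
move=> pq; elim: m => [|m IH] lt; first by rewrite coprimen1.
rewrite factS coprimeMr IH ?andbT; last by apply: ltnW.
by rewrite prime_coprime // gtnNdvd.
Qed.

Lemma dvd_ffact n t m : t < m -> (n - t) %| n ^_ m.
Proof.
elim: m => [//|m IH] lt; rewrite ffactnSr.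
case: (ltnP t m) => h; first by apply: dvdn_mulr; apply: IH.
have -> : t = m by lia.
exact: dvdn_mull.
Qed.

Lemma pa_dvd p a n k : prime p -> p ^ a %| n -> 0 < k ->
  ~~ (p %| 'C(n, k)) -> p ^ a %| k.
Proof.
move=> pp dn k0 nd.
have e := mul_bin_diag n k.-1.
rewrite prednK // in e.
have co : coprime (p ^ a) 'C(n, k) by apply: coprimeXl; rewrite prime_coprime.
rewrite -(Gauss_dvdl _ co) -e; exact: dvdn_mulr.
Qed.

Lemma q_dvd n q k : prime q -> 0 < k < q -> q.*2 <= n -> n - k < q.*2 ->
  q %| 'C(n, k).
Proof.
move=> pq /andP [k0 kq] h1 h2.
have co : coprime q k`! by apply: coprime_fact.
rewrite -(Gauss_dvdl _ co) bin_ffact.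
have hk : n - q.*2 < k by lia.
have := @dvd_ffact n _ _ hk.
rewrite (_ : n - (n - q.*2) = q.*2); last by lia.
apply: dvdn_trans; rewrite -muln2; exact: dvdn_mulr.
Qed.

(* n/3 < q < n/2 over the rationals is rendered as n < 3*q and 2*q < n. *)
Theorem mainTheorem9 (n p a q : nat) :
  odd n -> prime p -> 1 <= a -> p ^ a %| n ->
  prime q -> n < 3 * q -> 2 * q < n -> n - 2 * q < p ^ a ->
  forall k : nat, 1 <= k <= n - 1 -> (p %| 'C(n, k)) || (q %| 'C(n, k)).
Proof.
move=> on pp a1 dn pq h3 h2 hr k /andP [k1 kn].
case pd: (p %| 'C(n, k)) => //=.
have nd : ~~ (p %| 'C(n, k)) by rewrite pd.
have dk := @pa_dvd p a n k pp dn k1 nd.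
have dnk : p ^ a %| n - k.
  apply: (@pa_dvd p a n (n - k) pp dn); first by lia.
  by rewrite bin_sub //; lia.
have Pk : p ^ a <= k by apply: dvdn_leq.
have Pnk : p ^ a <= n - k by apply: dvdn_leq => //; lia.
move: dk dnk => /dvdnP [u ku] /dvdnP [v ev].
set P := p ^ a in hr ev ku Pk Pnk; clearbody P.
have nuv : n = (u + v) * P.
  rewrite mulnDl; lia.
have uv : u != v.
  by apply/eqP => E; move: on; rewrite nuv E addnn oddM odd_double.
case: (ltngtP u v) uv => // huv _.
- have : u.+1 * P <= v * P by rewrite leq_mul2r huv orbT.
  rewrite mulSn => hh.
  apply: q_dvd => //; rewrite -?muln2; [apply/andP; split; lia | lia | lia].
- have : v.+1 * P <= u * P by rewrite leq_mul2r huv orbT.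
  rewrite mulSn => hh.
  rewrite -bin_sub; last by lia.
  apply: q_dvd => //; rewrite -?muln2; [apply/andP; split; lia | lia | lia].
Qed.
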